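(* Let $\alpha\in[0,\pi/2)$, $A\in\Pi^n_{s,\alpha}$ and $q\in\mathbb{C}$ with $0<|q|\le1$. Then \[ \frac{|q|^2\cos^2\alpha}{2}\|A^*A+AA^*\|\le w_q^2(A)\le\left(\sqrt{(1-|q|^2)(1+2\sin^2(\alpha))}+|q|\right)^2\frac{\|A^*A+AA^*\|}{2}. \]
   Context: $M_n$ is the algebra of complex $n\times n$ matrices with the operator norm $\|\cdot\|$. For $|q|\le1$, $w_q(A)=\sup\{|\langle Ax,y\rangle|: \|x\|=\|y\|=1,\ \langle x,y\rangle=q\}$. $W(A)=\{\langle Ax,x\rangle:\|x\|=1\}$, $S_\alpha=\{z:\operatorname{Re}z>0,\ |\operatorname{Im}z|\le\tan(\alpha)\operatorname{Re}z\}$ and $\Pi^n_{s,\alpha}=\{A\in M_n: W(A)\subseteq S_\alpha\}$. *)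

(* Defs.v *)
From HB Require Import structures.
From mathcomp Require Import all_boot all_order all_algebra.
From mathcomp Require Import all_classical all_reals.
From mathcomp Require Import trigo.
From mathcomp Require Import complex.
Set Implicit Arguments. Unset Strict Implicit. Unset Printing Implicit Defensive.
Import Order.TTheory GRing.Theory Num.Theory.
Local Open Scope ring_scope.
Local Open Scope classical_set_scope.

Section Defs.
Variable R : realType.
Local Notation C := R[i].

Definition cabs (z : C) : R := Num.sqrt (complex.Re z ^+ 2 + complex.Im z ^+ 2).

Definition inner n (x y : 'cV[C]_n) : C := \sum_(i < n) x i 0 * conjc (y i 0).

Definition vnorm n (x : 'cV[C]_n) : R := Num.sqrt (complex.Re (inner x x)).

Definition adjmx n (A : 'M[C]_n) : 'M[C]_n := (map_mx (@conjc R) A)^T.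

Definition opnorm n (A : 'M[C]_n) : R :=
  sup [set vnorm (A *m x) | x in [set x : 'cV[C]_n | vnorm x = 1]].

Definition wq n (q : C) (A : 'M[C]_n) : R :=
  sup [set r | exists x y : 'cV[C]_n,
     [/\ vnorm x = 1, vnorm y = 1, inner x y = q & r = cabs (inner (A *m x) y)]].

Definition numrange n (A : 'M[C]_n) : set C :=
  [set inner (A *m x) x | x in [set x : 'cV[C]_n | vnorm x = 1]].

Definition sector (alpha : R) : set C :=
  [set z | 0 < complex.Re z /\ `|complex.Im z| <= tan alpha * complex.Re z].

Definition Pi_s (n : nat) (alpha : R) : set 'M[C]_n :=
  [set A | numrange A `<=` sector alpha].
End Defs.

(* Main.v *)
Require Import Defs.
From HB Require Import structures.
From mathcomp Require Import all_boot all_order all_algebra.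
From mathcomp Require Import all_classical all_reals.
From mathcomp Require Import trigo.
From mathcomp Require Import complex.
From mathcomp Require Import ring lra.
Set Implicit Arguments. Unset Strict Implicit. Unset Printing Implicit Defensive.
Import Order.TTheory GRing.Theory Num.Theory.
Local Open Scope ring_scope.
Local Open Scope classical_set_scope.
Local Open Scope complex_scope.
Section Cplx.
Variable R : realType.
Local Notation C := R[i].
Local Notation Re := (@complex.Re R).
Local Notation Im := (@complex.Im R).

Lemma ReM (x y : C) : Re (x*y) = Re x * Re y - Im x * Im y.
Proof. by case: x => a b; case: y => c d /=. Qed.
Lemma ImM (x y : C) : Im (x*y) = Re x * Im y + Im x * Re y.
Proof. by case: x => a b; case: y => c d /=. Qed.
Lemma ReD (x y : C) : Re (x+y) = Re x + Re y.
Proof. by case: x => a b; case: y => c d /=. Qed.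
Lemma ImD (x y : C) : Im (x+y) = Im x + Im y.
Proof. by case: x => a b; case: y => c d /=. Qed.
Lemma ReN (x : C) : Re (- x) = - Re x.
Proof. by case: x. Qed.
Lemma ImN (x : C) : Im (- x) = - Im x.
Proof. by case: x. Qed.
Lemma ReB (x y : C) : Re (x-y) = Re x - Re y.
Proof. by rewrite ReD ReN. Qed.
Lemma ImB (x y : C) : Im (x-y) = Im x - Im y.
Proof. by rewrite ImD ImN. Qed.
Lemma ReJ (x : C) : Re (conjc x) = Re x.
Proof. by case: x. Qed.
Lemma ImJ (x : C) : Im (conjc x) = - Im x.
Proof. by case: x. Qed.
Lemma ReR (a : R) : Re (a%:C) = a. Proof. by []. Qed.
Lemma ImR (a : R) : Im (a%:C) = 0. Proof. by []. Qed.
Lemma Re0 : Re 0 = 0. Proof. by []. Qed.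
Lemma Im0 : Im 0 = 0. Proof. by []. Qed.
Lemma Re1 : Re 1 = 1. Proof. by []. Qed.
Lemma Im1 : Im 1 = 0. Proof. by []. Qed.
Lemma Rei : Re 'i%C = 0. Proof. by []. Qed.
Lemma Imi : Im 'i%C = 1. Proof. by []. Qed.
Lemma ReSum (I : finType) (F : I -> C) : Re (\sum_i F i) = \sum_i Re (F i).
Proof. by apply: (big_morph _ ReD Re0). Qed.
Lemma ImSum (I : finType) (F : I -> C) : Im (\sum_i F i) = \sum_i Im (F i).
Proof. by apply: (big_morph _ ImD Im0). Qed.
Lemma conjSum (I : finType) (F : I -> C) : conjc (\sum_i F i) = \sum_i conjc (F i).
Proof. by rewrite rmorph_sum. Qed.
Lemma conjM (x y : C) : conjc (x * y) = conjc x * conjc y.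
Proof. by rewrite rmorphM. Qed.
Lemma conjD (x y : C) : conjc (x + y) = conjc x + conjc y.
Proof. by rewrite rmorphD. Qed.
Lemma conjK (x : C) : conjc (conjc x) = x.
Proof. by case: x => a b /=; rewrite opprK. Qed.
Lemma complex_eq (x y : C) : Re x = Re y -> Im x = Im y -> x = y.
Proof. by case: x => a b; case: y => c d /= -> ->. Qed.

Definition reimE := (ReD, ReB, ReN, ImD, ImB, ImN, ReM, ImM, ReJ, ImJ).

Definition sq (z : C) : R := Re z ^+ 2 + Im z ^+ 2.
Lemma sq_ge0 (z : C) : 0 <= sq z.
Proof. by rewrite /sq addr_ge0 // sqr_ge0. Qed.
Lemma cabsE (z : C) : cabs z = Num.sqrt (sq z). Proof. by []. Qed.
Lemma cabs_ge0 (z : C) : 0 <= cabs z. Proof. exact: sqrtr_ge0. Qed.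
Lemma cabs_sq (z : C) : cabs z ^+ 2 = sq z.
Proof. by rewrite cabsE sqr_sqrtr // sq_ge0. Qed.
Lemma cabs_normc (z : C) : cabs z = ComplexField.Normc.normc z.
Proof. by case: z. Qed.
Lemma cabsM (x y : C) : cabs (x * y) = cabs x * cabs y.
Proof. by rewrite !cabs_normc ComplexField.Normc.normcM. Qed.
Lemma cabsD (x y : C) : cabs (x + y) <= cabs x + cabs y.
Proof. by rewrite !cabs_normc le_normcD. Qed.
Lemma sqM (x y : C) : sq (x * y) = sq x * sq y.
Proof. rewrite /sq ReM ImM; ring. Qed.
Lemma sqJ (x : C) : sq (conjc x) = sq x.
Proof. by rewrite /sq ReJ ImJ sqrrN. Qed.
Lemma sq_eq0 (z : C) : sq z = 0 -> z = 0.
Proof.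
move=> h; have h1 : Re z ^+ 2 = 0 by move: h (sqr_ge0 (Re z)) (sqr_ge0 (Im z)); rewrite /sq; lra.
have h2 : Im z ^+ 2 = 0 by move: h (sqr_ge0 (Re z)) (sqr_ge0 (Im z)); rewrite /sq; lra.
apply: complex_eq; [move/eqP: h1|move/eqP: h2]; rewrite sqrf_eq0 => /eqP -> //.
Qed.
Lemma Re_le_cabs (z : C) : Re z <= cabs z.
Proof.
have h : `|Re z| <= cabs z.
  rewrite -[X in X <= _]sqrtr_sqr cabsE ler_sqrt ?sq_ge0 //.
  by rewrite /sq lerDl sqr_ge0.
by apply: le_trans h; rewrite ler_norm.
Qed.
Lemma Im_le_cabs (z : C) : `|Im z| <= cabs z.
Proof.
rewrite -[X in X <= _]sqrtr_sqr cabsE ler_sqrt ?sq_ge0 //.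
by rewrite /sq lerDr sqr_ge0.
Qed.
Lemma sq_real (a : R) : sq a%:C = a ^+ 2.
Proof. by rewrite /sq /= expr0n /= addr0. Qed.
Lemma cabs_real (a : R) : cabs a%:C = `|a|.
Proof. by rewrite cabsE sq_real sqrtr_sqr. Qed.
End Cplx.
Section Vec.
Variable R : realType.
Variable n : nat.
Local Notation C := R[i].
Local Notation Re := (@complex.Re R).
Local Notation Im := (@complex.Im R).
Local Notation V := 'cV[C]_n.
Local Notation M := 'M[C]_n.

Lemma innerDl (x y z : V) : inner (x + y) z = inner x z + inner y z.
Proof. by rewrite /inner -big_split; apply: eq_bigr => i _; rewrite mxE mulrDl. Qed.
Lemma innerZl (a : C) (x z : V) : inner (a *: x) z = a * inner x z.
Proof. by rewrite /inner mulr_sumr; apply: eq_bigr => i _; rewrite mxE mulrA. Qed.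
Lemma innerNl (x z : V) : inner (- x) z = - inner x z.
Proof. by rewrite -scaleN1r innerZl mulN1r. Qed.
Lemma innerBl (x y z : V) : inner (x - y) z = inner x z - inner y z.
Proof. by rewrite innerDl innerNl. Qed.
Lemma innerC (x y : V) : inner y x = conjc (inner x y).
Proof.
rewrite /inner conjSum; apply: eq_bigr => i _.
by rewrite conjM conjK mulrC.
Qed.
Lemma innerDr (x y z : V) : inner z (x + y) = inner z x + inner z y.
Proof. by rewrite innerC innerDl conjD -!innerC. Qed.
Lemma innerZr (a : C) (x z : V) : inner z (a *: x) = conjc a * inner z x.
Proof. by rewrite innerC innerZl conjM -innerC. Qed.
Lemma innerNr (x z : V) : inner z (- x) = - inner z x.
Proof. by rewrite -scaleN1r innerZr rmorphN rmorph1 mulN1r. Qed.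
Lemma innerBr (x y z : V) : inner z (x - y) = inner z x - inner z y.
Proof. by rewrite innerDr innerNr. Qed.
Lemma inner0l (z : V) : inner 0 z = 0.
Proof. by rewrite -(scale0r (0 : V)) innerZl mul0r. Qed.
Lemma inner0r (z : V) : inner z 0 = 0.
Proof. by rewrite -(scale0r (0 : V)) innerZr rmorph0 mul0r. Qed.

Lemma adjmxE (A : M) i j : adjmx A i j = conjc (A j i).
Proof. by rewrite /adjmx !mxE. Qed.
Lemma adjmxK (A : M) : adjmx (adjmx A) = A.
Proof. by apply/matrixP => i j; rewrite !adjmxE conjK. Qed.
Lemma inner_adj (A : M) (x y : V) : inner (A *m x) y = inner x (adjmx A *m y).
Proof.
rewrite /inner.
under eq_bigr => i _ do rewrite mxE mulr_suml.
rewrite exchange_big /=; apply: eq_bigr => j _.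
rewrite mxE conjSum mulr_sumr; apply: eq_bigr => i _.
by rewrite adjmxE conjM conjK mulrCA mulrA.
Qed.
Lemma inner_adjr (A : M) (x y : V) : inner x (A *m y) = inner (adjmx A *m x) y.
Proof. by rewrite inner_adj adjmxK. Qed.

Definition nn (x : V) : R := Re (inner x x).
Lemma nnE (x : V) : nn x = \sum_i sq (x i 0).
Proof.
rewrite /nn /inner ReSum; apply: eq_bigr => i _.
by rewrite ReM ReJ ImJ /sq; ring.
Qed.
Lemma Im_inner_xx (x : V) : Im (inner x x) = 0.
Proof.
rewrite /inner ImSum big1 // => i _; by rewrite ImM ReJ ImJ; ring.
Qed.
Lemma inner_xx (x : V) : inner x x = (nn x)%:C.
Proof. by apply: complex_eq; rewrite ?Im_inner_xx. Qed.
Lemma nn_ge0 (x : V) : 0 <= nn x.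
Proof. by rewrite nnE sumr_ge0 // => i _; apply: sq_ge0. Qed.
Lemma nn_eq0 (x : V) : nn x = 0 -> x = 0.
Proof.
rewrite nnE => /eqP; rewrite psumr_eq0 => [|i _]; last exact: sq_ge0.
move=> /allP h; apply/matrixP => i j; rewrite (ord1 j) mxE.
by apply: sq_eq0; apply/eqP; apply: h; rewrite mem_index_enum.
Qed.
Lemma vnormE (x : V) : vnorm x = Num.sqrt (nn x). Proof. by []. Qed.
Lemma vnorm1 (x : V) : vnorm x = 1 <-> nn x = 1.
Proof.
rewrite vnormE; split=> [h|->]; last by rewrite sqrtr1.
by rewrite -(sqr_sqrtr (nn_ge0 x)) h expr1n.
Qed.
Lemma nnZ (a : C) (x : V) : nn (a *: x) = sq a * nn x.
Proof.
rewrite /nn innerZl innerZr inner_xx mulrA ReM ReM ImM ReJ ImJ /= /sq; ring.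
Qed.
Lemma nnD (x y : V) : nn (x + y) = nn x + nn y + 2 * Re (inner x y).
Proof.
rewrite /nn innerDl !innerDr !ReD [inner y x]innerC ReJ; ring.
Qed.
Lemma nnB (x y : V) : nn (x - y) = nn x + nn y - 2 * Re (inner x y).
Proof.
rewrite nnD -scaleN1r innerZr nnZ rmorphN rmorph1 mulN1r ReN /sq /=; ring.
Qed.
End Vec.
Section RealLemmas.
Variable R : realType.
Lemma quad_lemma (a b Z : R) : 0 <= a -> 0 <= b -> 0 <= Z ->
  (forall t, 0 <= a - 2 * t * Z + t ^+ 2 * Z * b) -> Z <= a * b.
Proof.
move=> a0 b0 Z0 h.
have [b_gt0|] := ltrP 0 b.
  have := mulr_ge0 (ltW b_gt0) (h b^-1).
  have -> : b * (a - 2 * b^-1 * Z + b^-1 ^+ 2 * Z * b) = a * b - Z.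
    by field; rewrite gt_eqF.
  by rewrite subr_ge0.
move=> b_le0; have b_eq0 : b = 0 by apply/le_anti; rewrite b_le0 b0.
have [Z_gt0|] := ltrP 0 Z; last by move=> Zle; rewrite b_eq0 mulr0.
have := h ((a + 1) / (2 * Z)); rewrite b_eq0 mulr0 addr0.
have -> : 2 * ((a + 1) / (2 * Z)) * Z = a + 1 by field; rewrite gt_eqF.
lra.
Qed.

Lemma polar_lemma (k X V : R) : 0 <= k -> 0 <= X -> 0 <= V ->
  (forall r, 2 * r * V <= k * (r ^+ 2 * X + V)) -> V <= k ^+ 2 * X.
Proof.
move=> k0 X0 V0 h.
have [kX_gt0|] := ltrP 0 (k * X).
  have := h (V / (k * X)); set r := V / (k * X) => hr.
  have hrr : r * (k * X) = V by rewrite /r mulfVK // gt_eqF.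
  have hV2 : V ^+ 2 <= k ^+ 2 * X * V by nra.
  have [V_gt0|] := ltrP 0 V; last by move=> ?; nra.
  nra.
move=> kX_le0; have kX0 : k * X = 0 by apply/le_anti; rewrite kX_le0 mulr_ge0.
move/eqP: kX0; rewrite mulf_eq0 => /orP [/eqP k0'|/eqP X0'].
  by have := h 1; rewrite k0' mul0r; nra.
have := h (k + 1); rewrite X0'; nra.
Qed.
End RealLemmas.
Section Forms.
Variable R : realType.
Variable n : nat.
Local Notation C := R[i].
Local Notation Re := (@complex.Re R).
Local Notation Im := (@complex.Im R).
Local Notation V := 'cV[C]_n.
Local Notation M := 'M[C]_n.

Definition Herm (B : M) := forall x y : V, inner (B *m x) y = inner x (B *m y).

Lemma herm_Im (B : M) (x : V) : Herm B -> Im (inner (B *m x) x) = 0.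
Proof.
move=> hB; have := hB x x; rewrite [inner x _]innerC => /(congr1 Im).
rewrite ImJ => h; lra.
Qed.
Lemma herm_real (B : M) (x : V) : Herm B -> inner (B *m x) x = (Re (inner (B *m x) x))%:C.
Proof. by move=> hB; apply: complex_eq => //=; rewrite herm_Im. Qed.
Lemma herm_swap (B : M) (x y : V) : Herm B -> inner (B *m y) x = conjc (inner (B *m x) y).
Proof. by move=> hB; rewrite hB innerC. Qed.

Lemma form_CS (P : M) (u v : V) : Herm P -> (forall z : V, 0 <= Re (inner (P *m z) z)) ->
  sq (inner (P *m u) v) <= Re (inner (P *m u) u) * Re (inner (P *m v) v).
Proof.
move=> hP hpsd; set z := inner (P *m u) v.
set a := Re (inner (P *m u) u); set b := Re (inner (P *m v) v).
apply: quad_lemma; rewrite ?sq_ge0 ?hpsd // => t.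
have := hpsd (u - (t%:C * z) *: v).
rewrite mulmxBr -scalemxAr innerBl !innerBr !innerZl !innerZr.
rewrite (herm_swap u v hP) -/z (herm_real u hP) (herm_real v hP) -/a -/b.
rewrite !conjM conjc_real.
rewrite ?reimE /= /sq.
match goal with |- is_true (0 <= ?X) -> _ =>
  have -> : X = a - 2 * t * (Re z ^+ 2 + Im z ^+ 2) + t ^+ 2 * (Re z ^+ 2 + Im z ^+ 2) * b by ring end.
done.
Qed.

Lemma herm1 : Herm 1%:M.
Proof. by move=> x y; rewrite !mul1mx. Qed.

Lemma CS (u v : V) : sq (inner u v) <= nn u * nn v.
Proof.
have := form_CS u v herm1; rewrite !mul1mx; apply => z.
by rewrite mul1mx; apply: nn_ge0.
Qed.

Lemma Re_inner_le (u v : V) : (Re (inner u v)) ^+ 2 <= nn u * nn v.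
Proof. by apply: le_trans (CS u v); rewrite /sq lerDl sqr_ge0. Qed.

Lemma polarization (B : M) (k : R) : Herm B -> 0 <= k ->
  (forall y : V, `|Re (inner (B *m y) y)| <= k * nn y) ->
  forall x : V, nn (B *m x) <= k ^+ 2 * nn x.
Proof.
move=> hB k0 hk x; set v := B *m x.
apply: polar_lemma; rewrite ?nn_ge0 // => r.
have e1 : inner (B *m x) v = (nn v)%:C by rewrite inner_xx.
have e2 : inner (B *m v) x = (nn v)%:C by rewrite hB -/v [inner v v]inner_xx.
have hp := hk (r%:C *: x + v); have hm := hk (r%:C *: x - v).
move: hp hm; rewrite nnD nnB !nnZ ?mulmxDr ?mulmxN -!scalemxAr -/v.
rewrite ?innerDl ?innerNl ?innerDr ?innerNr ?innerZl ?innerZr e1 e2 conjc_real.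
rewrite (herm_real x hB) (herm_real v hB).
rewrite ?reimE /= ?sq_real.
set gx := Re (inner (B *m x) x); set gv := Re (inner (B *m v) v).
set w := Re (inner x v); set X := nn x; set W := nn v.
rewrite !ler_norml => /andP[h1 h2] /andP[h3 h4].
nra.
Qed.

End Forms.
Section Sups.
Variable R : realType.
Lemma sup_le (E : set R) (B : R) : 0 <= B -> (forall x, E x -> x <= B) -> sup E <= B.
Proof.
move=> B0 hB; have [->|ne] := eqVneq E set0; first by rewrite sup0.
by apply: ge_sup => //; apply/set0P.
Qed.
Lemma le_sup (E : set R) (B x : R) : (forall y, E y -> y <= B) -> E x -> x <= sup E.
Proof.
move=> hB Ex; apply: sup_upper_bound => //; split; first by exists x.
by exists B => y Ey; apply: hB.
Qed.
Lemma sup_ge0 (E : set R) (B : R) : (forall y, E y -> y <= B) -> (forall y, E y -> 0 <= y) -> 0 <= sup E.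
Proof.
move=> hB h0; have [->|/set0P] := eqVneq E set0; first by rewrite sup0.
case=> x Ex.
exact: le_trans (h0 _ Ex) (le_sup hB Ex).
Qed.
End Sups.

Section Scale.
Variable R : realType.
Variable n : nat.
Local Notation C := R[i].
Local Notation Re := (@complex.Re R).
Local Notation Im := (@complex.Im R).
Local Notation V := 'cV[C]_n.
Local Notation M := 'M[C]_n.

Lemma unit_decomp (y : V) : y = 0 \/ exists (s : R) (y1 : V),
  [/\ 0 < s, nn y1 = 1, y = s%:C *: y1 & nn y = s ^+ 2].
Proof.
have [y0|ny] := eqVneq (nn y) 0; first by left; apply: nn_eq0.
right; have ny_gt0 : 0 < nn y by rewrite lt_def ny nn_ge0.
set s := Num.sqrt (nn y).
have s_gt0 : 0 < s by rewrite sqrtr_gt0.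
exists s, ((s^-1)%:C *: y); split => //.
- rewrite nnZ sq_real exprVn sqr_sqrtr ?nn_ge0 // mulVf //.
- by rewrite scalerA -rmorphM /= mulfV ?gt_eqF // scale1r.
- by rewrite sqr_sqrtr // nn_ge0.
Qed.

Lemma inner_scale (B : M) (s : R) (y : V) :
  inner (B *m (s%:C *: y)) (s%:C *: y) = (s ^+ 2)%:C * inner (B *m y) y.
Proof. by rewrite -scalemxAr innerZl innerZr conjc_real mulrA -rmorphM /= expr2. Qed.

Lemma nn_scale (B : M) (s : R) (y : V) :
  nn (B *m (s%:C *: y)) = s ^+ 2 * nn (B *m y).
Proof. by rewrite -scalemxAr nnZ sq_real. Qed.

Lemma crude_bound (B : M) : exists k : R, 0 <= k /\ forall x : V, nn (B *m x) <= k * nn x.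
Proof.
pose u (i : 'I_n) : V := \col_j conjc (B i j).
exists (\sum_i nn (u i)); split; first by apply: sumr_ge0 => i _; apply: nn_ge0.
move=> x; rewrite [nn (B *m x)]nnE mulr_suml; apply: ler_sum => i _.
have -> : (B *m x) i 0 = inner x (u i).
  rewrite mxE /inner; apply: eq_bigr => j _; by rewrite mxE conjK mulrC.
by rewrite mulrC; apply: CS.
Qed.

Lemma opnorm_ge0 (B : M) : 0 <= opnorm B.
Proof.
have [k [k0 hk]] := crude_bound B.
apply: (@sup_ge0 _ _ (Num.sqrt k)).
  move=> r [x /= /vnorm1 x1 <-]; rewrite vnormE ler_sqrt //.
  by have := hk x; rewrite x1 mulr1.
by move=> r [x _ <-]; apply: sqrtr_ge0.
Qed.

Lemma opnorm_bound (B : M) (x : V) : nn (B *m x) <= opnorm B ^+ 2 * nn x.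
Proof.
have [k [k0 hk]] := crude_bound B.
have hu : forall y : V, nn y = 1 -> vnorm (B *m y) <= opnorm B.
  move=> y y1; apply: (@le_sup _ _ (Num.sqrt k)).
    move=> r [z /= /vnorm1 z1 <-]; rewrite vnormE ler_sqrt //.
    by have := hk z; rewrite z1 mulr1.
  by exists y => //=; apply/vnorm1.
case: (unit_decomp x) => [->|[s [y1 [s0 y11 -> nx]]]].
  by rewrite mulmx0 /nn !inner0l /= mulr0.
rewrite nn_scale nx mulrC ler_pM2r ?exprn_gt0 //.
have := hu y1 y11; rewrite vnormE => h.
rewrite -(sqr_sqrtr (nn_ge0 (B *m y1))).
by rewrite lerXn2r ?nnegrE ?sqrtr_ge0 ?opnorm_ge0.
Qed.
End Scale.
Section FinalReal.
Variable R : realType.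
Lemma le_from_sq (I P : R) : 0 <= P -> I ^+ 2 <= P ^+ 2 -> I <= P.
Proof. move=> P0 h; nra. Qed.

Lemma key_real (c s r mu a k I : R) :
  0 < c -> 0 <= s -> s ^+ 2 + c ^+ 2 = 1 -> 0 <= r -> 0 <= mu -> 0 <= a -> 0 <= k ->
  mu ^+ 2 <= a -> a <= mu * r -> c ^+ 2 * k <= s ^+ 2 * mu * r -> a + k <= r ^+ 2 ->
  I ^+ 2 <= (a - mu ^+ 2) * k ->
  a + k + 2 * I <= (1 + 2 * s ^+ 2) * r ^+ 2.
Proof.
move=> c0 s0 sc r0 mu0 a0 k0 hmu har hkr hakr hI.
have c1 : c <= 1 by nra.
have [hmc|hmc] := lerP mu (c ^+ 2 * r).
  have h1 : 2 * c * I <= c ^+ 2 * k + (a - mu ^+ 2).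
    apply: le_from_sq; first by nra.
    have := sqr_ge0 (c ^+ 2 * k - (a - mu ^+ 2)).
    have := ler_wpM2l (sqr_ge0 c) hI.
    nra.
  have h2 : 0 <= (c ^+ 2 * r - mu) * ((c ^+ 2 + (1 + c) * s ^+ 2 + c) * r - c * (c ^+ 2 * r + mu)).
    apply: mulr_ge0; first by lra.
    have hc3 : c * c ^+ 2 <= c by rewrite ler_piMr //; nra.
    have e1 : c * mu <= c * (c ^+ 2 * r) by apply: ler_wpM2l; lra.
    have e2 : 0 <= r * (c - c * c ^+ 2) by apply: mulr_ge0; lra.
    have e3 : 0 <= r * (c * s ^+ 2) by apply: mulr_ge0 => //; nra.
    have e4 : 0 <= r * (1 - c) by apply: mulr_ge0; lra.
    nra.
  have h3 : c ^+ 2 * (a + k + 2 * I) <= c ^+ 2 * ((1 + 2 * s ^+ 2) * r ^+ 2).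
    have p1 := ler_wpM2l (ltW c0) h1.
    have p2 : c ^+ 2 * a <= c ^+ 2 * (mu * r) by apply: ler_wpM2l => //; apply: sqr_ge0.
    have p3 : c * (c ^+ 2 * k) <= c * (s ^+ 2 * mu * r) by apply: ler_wpM2l => //; lra.
    have p4 : c * a <= c * (mu * r) by apply: ler_wpM2l => //; lra.
    have q1 : c ^+ 2 * r ^+ 2 * (s ^+ 2 + c ^+ 2) = c ^+ 2 * r ^+ 2 by rewrite sc mulr1.
    have q2 : c ^+ 3 * r ^+ 2 * (s ^+ 2 + c ^+ 2) = c ^+ 3 * r ^+ 2 by rewrite sc mulr1.
    have q3 : c * (c ^+ 2 * s ^+ 2 * r ^+ 2) <= 1 * (c ^+ 2 * s ^+ 2 * r ^+ 2).
      by apply: ler_wpM2r => //; apply: mulr_ge0; [apply: mulr_ge0|]; apply: sqr_ge0.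
    move: p1 p2 p3 p4 q1 q2 q3 h2; rewrite ?exprSr ?expr1 ?expr0 ?mul1r => *.
    nra.
  by rewrite ler_pM2l ?exprn_gt0 in h3.
have h1 : 2 * I <= r ^+ 2 - mu ^+ 2.
  apply: le_from_sq; first by nra.
  have hk' : k <= r ^+ 2 - a by lra.
  have : (a - mu ^+ 2) * k <= (a - mu ^+ 2) * (r ^+ 2 - a) by apply: ler_wpM2l; lra.
  have := sqr_ge0 ((a - mu ^+ 2) - (r ^+ 2 - a)).
  nra.
have m1 : (c ^+ 2 * r) * (c ^+ 2 * r) <= mu * mu.
  have cr0 : 0 <= c ^+ 2 * r by apply: mulr_ge0 => //; apply: sqr_ge0.
  by apply: ler_pM => //; apply: ltW.
have q1 : c ^+ 2 * r ^+ 2 * (s ^+ 2 + c ^+ 2) = c ^+ 2 * r ^+ 2 by rewrite sc mulr1.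
have q2 : r ^+ 2 * (s ^+ 2 + c ^+ 2) = r ^+ 2 by rewrite sc mulr1.
have q3 : c ^+ 2 * (s ^+ 2 * r ^+ 2) <= 1 * (s ^+ 2 * r ^+ 2).
  by apply: ler_wpM2r; [apply: mulr_ge0; apply: sqr_ge0|nra].
move: m1 q1 q2 q3; rewrite ?exprSr ?expr1 ?expr0 ?mul1r => *.
nra.
Qed.
End FinalReal.
Section GenCSReal.
Variable R : realType.
Lemma gen_CS_real (a1 b1 a2 b2 Qu Qv Pu Pv : R) :
  0 <= Qu -> 0 <= Qv -> 0 <= Pu -> 0 <= Pv ->
  a1 ^+ 2 + b1 ^+ 2 <= Qu * Qv -> a2 ^+ 2 + b2 ^+ 2 <= Pu * Pv ->
  (a1 - a2) ^+ 2 + (b1 - b2) ^+ 2 <= (Qu + Pu) * (Qv + Pv).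
Proof.
move=> Qu0 Qv0 Pu0 Pv0 h1 h2.
have L : (a1 * a2 + b1 * b2) ^+ 2 <= (a1 ^+ 2 + b1 ^+ 2) * (a2 ^+ 2 + b2 ^+ 2).
  have := sqr_ge0 (a1 * b2 - a2 * b1); nra.
have L2 : (a1 ^+ 2 + b1 ^+ 2) * (a2 ^+ 2 + b2 ^+ 2) <= (Qu * Qv) * (Pu * Pv).
  apply: ler_pM => //; nra.
have L3 : (- 2 * (a1 * a2 + b1 * b2)) <= Qu * Pv + Pu * Qv.
  apply: le_from_sq; first by nra.
  have := sqr_ge0 (Qu * Pv - Pu * Qv); nra.
nra.
Qed.
End GenCSReal.
Section MainAlg.
Variable R : realType.
Variable n : nat.
Local Notation C := R[i].
Local Notation Re := (@complex.Re R).
Local Notation Im := (@complex.Im R).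
Local Notation V := 'cV[C]_n.
Local Notation M := 'M[C]_n.
Variable A : M.

Definition hC : C := (2^-1 : R)%:C.
Definition kC : C := hC * - 'i.
Definition Hm : M := hC *: (A + adjmx A).
Definition Km : M := kC *: (A - adjmx A).
Definition Mm : M := adjmx A *m A + A *m adjmx A.

Lemma conj_hC : conjc hC = hC. Proof. exact: conjc_real. Qed.
Lemma conj_kC : conjc kC = - kC.
Proof. by apply: complex_eq; rewrite /kC /hC ?reimE /=; ring. Qed.

Lemma inner_adj' (B : M) (x y : V) : inner (adjmx B *m x) y = inner x (B *m y).
Proof. by rewrite inner_adj adjmxK. Qed.

Lemma hermH : Herm Hm.
Proof.
move=> x y; rewrite /Hm -!scalemxAl !mulmxDl innerZl innerZr !innerDl !innerDr.
by rewrite conj_hC inner_adj inner_adj' addrC.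
Qed.
Lemma hermK : Herm Km.
Proof.
move=> x y; rewrite /Km -!scalemxAl !mulmxBl innerZl innerZr !innerBl !innerBr.
rewrite conj_kC inner_adj inner_adj'; ring.
Qed.
Lemma hermM : Herm Mm.
Proof.
move=> x y; rewrite /Mm !mulmxDl -!mulmxA !innerDl !innerDr.
rewrite (inner_adj' A (A *m x)) (inner_adj A (adjmx A *m x)).
by rewrite (inner_adjr (adjmx A) x) (inner_adjr A x) adjmxK.
Qed.

Lemma A_HK : A = Hm + 'i *: Km.
Proof.
apply/matrixP => i j; rewrite !mxE.
by apply: complex_eq; rewrite /kC /hC ?reimE /=; field.
Qed.
Lemma adjA_HK : adjmx A = Hm - 'i *: Km.
Proof.
apply/matrixP => i j; rewrite !mxE.
by apply: complex_eq; rewrite /kC /hC ?reimE /=; field.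
Qed.
End MainAlg.
Section VecExtra.
Variable R : realType.
Variable n : nat.
Local Notation C := R[i].
Local Notation Re := (@complex.Re R).
Local Notation Im := (@complex.Im R).
Local Notation V := 'cV[C]_n.
Local Notation M := 'M[C]_n.

Lemma sq_i : sq 'i%C = 1 :> R.
Proof. by rewrite /sq /= expr0n /= add0r expr1n. Qed.

Lemma nn_parallel (u w : V) : nn (u + 'i *: w) + nn (u - 'i *: w) = 2 * (nn u + nn w).
Proof. rewrite nnD nnB nnZ sq_i mul1r; ring. Qed.

Lemma nnHK (u w : V) : nn (u + 'i *: w) = nn u + nn w + 2 * Re (inner u ('i *: w)).
Proof. by rewrite nnD nnZ sq_i mul1r. Qed.

Lemma herm_lin (H K : M) (a b : R) : Herm H -> Herm K -> Herm (a%:C *: H + b%:C *: K).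
Proof.
move=> hH hK x y; rewrite !mulmxDl -!scalemxAl innerDl !innerZl innerDr !innerZr !conjc_real.
by rewrite hH hK.
Qed.
Lemma lin_inner (H K : M) (a b : R) (x y : V) :
  inner ((a%:C *: H + b%:C *: K) *m x) y = a%:C * inner (H *m x) y + b%:C * inner (K *m x) y.
Proof. by rewrite mulmxDl -!scalemxAl innerDl !innerZl. Qed.
End VecExtra.

Section MainVec.
Variable R : realType.
Variable n : nat.
Local Notation C := R[i].
Local Notation Re := (@complex.Re R).
Local Notation Im := (@complex.Im R).
Local Notation V := 'cV[C]_n.
Local Notation M := 'M[C]_n.
Variable A : M.
Local Notation H := (Hm A).
Local Notation K := (Km A).
Local Notation B := (adjmx A).

Lemma A_vec (x : V) : A *m x = H *m x + 'i *: (K *m x).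
Proof. by rewrite scalemxAl -mulmxDl -A_HK. Qed.
Lemma B_vec (x : V) : B *m x = H *m x - 'i *: (K *m x).
Proof. by rewrite scalemxAl -mulmxBl -adjA_HK. Qed.

Lemma ReH (x : V) : Re (inner (H *m x) x) = Re (inner (A *m x) x).
Proof.
rewrite /Hm -scalemxAl mulmxDl innerZl innerDl inner_adj' [inner x _]innerC.
move: (inner (A *m x) x) => z.
by rewrite /hC ?reimE /=; lra.
Qed.
Lemma ReK (x : V) : Re (inner (K *m x) x) = Im (inner (A *m x) x).
Proof.
rewrite /Km -scalemxAl mulmxBl innerZl innerBl inner_adj' [inner x _]innerC.
move: (inner (A *m x) x) => z.
by rewrite /kC /hC ?reimE /=; lra.
Qed.

Lemma ReMxx (x : V) : Re (inner (Mm A *m x) x) = 2 * (nn (H *m x) + nn (K *m x)).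
Proof.
rewrite /Mm mulmxDl -!mulmxA innerDl ReD.
rewrite (inner_adj' A (A *m x)) (inner_adj A (adjmx A *m x)).
by rewrite -[_ + _]/(nn (A *m x) + nn (B *m x)) A_vec B_vec nn_parallel.
Qed.
End MainVec.
Section Core.
Variable R : realType.
Variable n : nat.
Local Notation C := R[i].
Local Notation Re := (@complex.Re R).
Local Notation Im := (@complex.Im R).
Local Notation V := 'cV[C]_n.
Local Notation M := 'M[C]_n.
Variables (H K Mv : M) (t : R).
Hypotheses (hH : Herm H) (hK : Herm K) (hM : Herm Mv) (t0 : 0 <= t).
Hypothesis hpsd : forall z : V, 0 <= Re (inner (H *m z) z).
Hypothesis hsec : forall z : V, `|Re (inner (K *m z) z)| <= t * Re (inner (H *m z) z).
Hypothesis hMv : forall x : V, Re (inner (Mv *m x) x) = 2 * (nn (H *m x) + nn (K *m x)).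

Lemma LB (W : R) : 0 <= W -> (forall y : V, Re (inner (H *m y) y) <= W * nn y) ->
  opnorm Mv <= 2 * (1 + t ^+ 2) * W ^+ 2.
Proof.
move=> W0 hW.
have h1 : forall x : V, nn (H *m x) <= W ^+ 2 * nn x.
  by apply: (polarization hH W0) => y; rewrite ger0_norm ?hpsd ?hW.
have h2 : forall x : V, nn (K *m x) <= (t * W) ^+ 2 * nn x.
  apply: (polarization hK (mulr_ge0 t0 W0)) => y.
  apply: le_trans (hsec y) _; have := ler_wpM2l t0 (hW y); by rewrite mulrA.
have k0 : 0 <= 2 * (1 + t ^+ 2) * W ^+ 2.
  by apply: mulr_ge0; [apply: mulr_ge0 => //; rewrite addr_ge0 ?sqr_ge0|apply: sqr_ge0].
have h3 : forall x : V, nn (Mv *m x) <= (2 * (1 + t ^+ 2) * W ^+ 2) ^+ 2 * nn x.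
  apply: (polarization hM k0) => y.
  have := h1 y; have := h2 y; have := nn_ge0 (H *m y); have := nn_ge0 (K *m y).
  have := nn_ge0 y.
  rewrite hMv exprMn; move: (nn (H *m y)) (nn (K *m y)) (nn y) => a b X.
  move=> X0 b0 a0 hb ha.
  rewrite ger0_norm; last by nra.
  nra.
apply: sup_le => // r [x /= /vnorm1 x1 <-].
rewrite vnormE -(ger0_norm k0) -sqrtr_sqr ler_sqrt ?sqr_ge0 //.
by have := h3 x; rewrite x1 mulr1.
Qed.

Let N := opnorm Mv.
Lemma N_ge0 : 0 <= N. Proof. exact: opnorm_ge0. Qed.

Lemma UBa (x : V) : nn (H *m x) + nn (K *m x) <= N / 2 * nn x.
Proof.
have h := CS (Mv *m x) x.
have hb := opnorm_bound Mv x.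
have hr : (Re (inner (Mv *m x) x)) ^+ 2 <= sq (inner (Mv *m x) x) by rewrite /sq lerDl sqr_ge0.
rewrite hMv in hr.
have := nn_ge0 (H *m x); have := nn_ge0 (K *m x); have := nn_ge0 x; have := N_ge0.
move: hr h hb; rewrite -/N.
move: (nn (H *m x)) (nn (K *m x)) (nn x) (nn (Mv *m x)) (sq (inner (Mv *m x) x)) N => a b X Y S N'.
move=> hr h hb N0 X0 b0 a0.
have : 2 * (a + b) <= N' * X.
  apply: le_from_sq; first by nra.
  have : S <= N' ^+ 2 * X * X by nra.
  nra.
move=> h'; rewrite mulrAC; lra.
Qed.
End Core.
Lemma Re_realM (R : realType) (a : R) (w : R[i]) : complex.Re (a%:C * w) = a * complex.Re w.
Proof. by rewrite ReM /= mul0r subr0. Qed.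
Lemma Im_realM (R : realType) (a : R) (w : R[i]) : complex.Im (a%:C * w) = a * complex.Im w.
Proof. by rewrite ImM /= mul0r addr0. Qed.

Lemma form_CS_lin (R : realType) (n : nat) (H K : 'M[R[i]]_n) (a b : R) (u v : 'cV[R[i]]_n) :
  Herm H -> Herm K ->
  (forall z, 0 <= complex.Re (a%:C * inner (H *m z) z + b%:C * inner (K *m z) z)) ->
  sq (a%:C * inner (H *m u) v + b%:C * inner (K *m u) v) <=
  complex.Re (a%:C * inner (H *m u) u + b%:C * inner (K *m u) u) *
  complex.Re (a%:C * inner (H *m v) v + b%:C * inner (K *m v) v).
Proof.
move=> hH hK hp.
have hP := herm_lin a b hH hK.
have := @form_CS R n _ u v hP.
rewrite !lin_inner; apply => z; rewrite lin_inner; exact: hp.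
Qed.

Section Core2.
Variable R : realType.
Variable n : nat.
Local Notation C := R[i].
Local Notation Re := (@complex.Re R).
Local Notation Im := (@complex.Im R).
Local Notation V := 'cV[C]_n.
Local Notation M := 'M[C]_n.
Variables (H K Mv : M) (t : R).
Hypotheses (hH : Herm H) (hK : Herm K) (hM : Herm Mv) (t0 : 0 <= t).
Hypothesis hpsd : forall z : V, 0 <= Re (inner (H *m z) z).
Hypothesis hsec : forall z : V, `|Re (inner (K *m z) z)| <= t * Re (inner (H *m z) z).
Hypothesis hMv : forall x : V, Re (inner (Mv *m x) x) = 2 * (nn (H *m x) + nn (K *m x)).

Lemma genCS (u v : V) :
  sq (inner (K *m u) v) <= t ^+ 2 * Re (inner (H *m u) u) * Re (inner (H *m v) v).
Proof.
have pP : forall z : V, 0 <= Re (t%:C * inner (H *m z) z + (-1)%:C * inner (K *m z) z).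
  move=> z; move: (hsec z).
  move: (inner (H *m z) z) (inner (K *m z) z) => a b.
  rewrite ?reimE /= ler_norml => /andP[_ h]; lra.
have pQ : forall z : V, 0 <= Re (t%:C * inner (H *m z) z + 1%:C * inner (K *m z) z).
  move=> z; move: (hsec z).
  move: (inner (H *m z) z) (inner (K *m z) z) => a b.
  rewrite ?reimE /= ler_norml => /andP[h _]; lra.
have cP := form_CS_lin u v hH hK pP.
have cQ := form_CS_lin u v hH hK pQ.
have gP := pP u; have gP' := pP v; have gQ := pQ u; have gQ' := pQ v.
move: cP cQ gP gP' gQ gQ'.
move: (inner (H *m u) v) (inner (K *m u) v) (inner (H *m u) u) (inner (K *m u) u).
move: (inner (H *m v) v) (inner (K *m v) v).
move=> hv kv zH zK hu ku.
rewrite /sq ?reimE /=.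
move=> cP cQ gP gP' gQ gQ'.
have := gen_CS_real gQ gQ' gP gP' cQ cP.
move: (Re zH) (Im zH) (Re zK) (Im zK) (Re hu) (Re ku) (Re hv) (Re kv) => a b c d e f g h.
nra.
Qed.

Let N := opnorm Mv.

Lemma UBb (x : V) : nn x = 1 ->
  (Re (inner (H *m x) x)) ^+ 2 + (Re (inner (K *m x) x)) ^+ 2 <= N / 2.
Proof.
move=> x1.
have h1 := Re_inner_le (H *m x) x; have h2 := Re_inner_le (K *m x) x.
have h3 : nn (H *m x) + nn (K *m x) <= N / 2 * nn x := UBa hMv x.
rewrite x1 mulr1 in h1 h2 h3; lra.
Qed.
End Core2.
Section Core3.
Variable R : realType.
Variable n : nat.
Local Notation C := R[i].
Local Notation Re := (@complex.Re R).
Local Notation Im := (@complex.Im R).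
Local Notation V := 'cV[C]_n.
Local Notation M := 'M[C]_n.
Variables (H K Mv : M) (t : R).
Hypotheses (hH : Herm H) (hK : Herm K) (hM : Herm Mv) (t0 : 0 <= t).
Hypothesis hpsd : forall z : V, 0 <= Re (inner (H *m z) z).
Hypothesis hsec : forall z : V, `|Re (inner (K *m z) z)| <= t * Re (inner (H *m z) z).
Hypothesis hMv : forall x : V, Re (inner (Mv *m x) x) = 2 * (nn (H *m x) + nn (K *m x)).

Lemma bound_from_CS (a mu g r : R) : 0 <= a -> 0 <= mu -> 0 <= g -> 0 <= r ->
  a ^+ 2 <= mu * g -> g ^+ 2 <= r ^+ 2 * a * a -> a <= mu * r.
Proof.
move=> a0 mu0 g0 r0 h1 h2.
have h3 : g <= r * a by apply: le_from_sq; [exact: mulr_ge0|rewrite exprMn; nra].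
have h4 : a * a <= a * (mu * r) by nra.
have [a_gt0|] := ltrP 0 a; first by rewrite ler_pM2l in h4.
move=> a_le0; have -> : a = 0 by apply/le_anti; rewrite a_le0 a0.
exact: mulr_ge0.
Qed.

Lemma UBc (c s : R) (x : V) : 0 < c -> 0 <= s -> s ^+ 2 + c ^+ 2 = 1 -> t * c = s ->
  nn x = 1 -> nn (H *m x + 'i *: (K *m x)) <= (1 + 2 * s ^+ 2) * (opnorm Mv / 2).
Proof.
move=> c0 s0 sc tc x1.
have N0 : 0 <= opnorm Mv / 2 by rewrite divr_ge0 // opnorm_ge0.
set r := Num.sqrt (opnorm Mv / 2).
have r0 : 0 <= r := sqrtr_ge0 _.
have hr : r ^+ 2 = opnorm Mv / 2 by rewrite sqr_sqrtr.
have hUB : forall v : V, nn (H *m v) + nn (K *m v) <= r ^+ 2 * nn v.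
  by move=> v; rewrite hr; exact: (UBa hMv v).
have hUBH : forall v : V, nn (H *m v) <= r ^+ 2 * nn v.
  by move=> v; apply: le_trans (hUB v); rewrite lerDl nn_ge0.
rewrite -hr.
set mu := Re (inner (H *m x) x).
set a := nn (H *m x).
set k := nn (K *m x).
have a0 : 0 <= a := nn_ge0 _.
have k0 : 0 <= k := nn_ge0 _.
have mu0 : 0 <= mu := hpsd x.
have f1 : a + k <= r ^+ 2 by have := hUB x; rewrite x1 mulr1.
have f3 : mu ^+ 2 <= a by have := Re_inner_le (H *m x) x; rewrite x1 mulr1.
have f4 : a <= mu * r.
  have cs := form_CS x (H *m x) hH hpsd.
  rewrite [inner (H *m x) (H *m x)]inner_xx sq_real -/a in cs.
  apply: (bound_from_CS a0 mu0 (hpsd _) r0 cs).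
  have := Re_inner_le (H *m (H *m x)) (H *m x).
  have := hUBH (H *m x); rewrite -/a => hb hg.
  apply: le_trans hg _; rewrite -mulrA [r ^+ 2 * _]mulrA. 
  by apply: ler_wpM2r => //.
have f5 : c ^+ 2 * k <= s ^+ 2 * mu * r.
  have cs := genCS hH hK hsec x (K *m x).
  rewrite [inner (K *m x) (K *m x)]inner_xx sq_real -/k -/mu in cs.
  have kb : k <= t ^+ 2 * mu * r.
    have g0 := hpsd (K *m x).
    apply: (bound_from_CS k0 (mulr_ge0 (sqr_ge0 t) mu0) g0 r0 cs).
    have := Re_inner_le (H *m (K *m x)) (K *m x).
    have := hUBH (K *m x); rewrite -/k => hb hg.
    apply: le_trans hg _; rewrite -mulrA [r ^+ 2 * _]mulrA.
    by apply: ler_wpM2r => //.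
  have := ler_wpM2l (sqr_ge0 c) kb.
  have -> : c ^+ 2 * (t ^+ 2 * mu * r) = s ^+ 2 * mu * r by rewrite -tc; ring.
  by [].
have f6 : (Re (inner (H *m x) ('i *: (K *m x)))) ^+ 2 <= (a - mu ^+ 2) * k.
  have e1 : Re (inner (H *m x - mu%:C *: x) ('i *: (K *m x))) =
            Re (inner (H *m x) ('i *: (K *m x))).
    rewrite innerBl ReB innerZl (innerZr _ (K *m x) x) (innerC (K *m x) x).
    rewrite (herm_real x hK).
    move: (Re (inner (K *m x) x)) => rho.
    rewrite Re_realM conjc_real ReM /= mul0r; lra.
  have := Re_inner_le (H *m x - mu%:C *: x) ('i *: (K *m x)).
  rewrite e1 nnZ sq_i mul1r -/k nnB nnZ sq_real x1 mulr1.
  rewrite (innerZr _ x (H *m x)) conjc_real Re_realM -/a -/mu.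
  by have -> : a + mu ^+ 2 - 2 * (mu * mu) = a - mu ^+ 2 by ring.
rewrite nnHK -/a -/k.
exact: key_real c0 s0 sc r0 mu0 a0 k0 f3 f4 f5 f1 f6.
Qed.
End Core3.
Section Orth.
Variable R : realType.
Variable n : nat.
Local Notation C := R[i].
Local Notation Re := (@complex.Re R).
Local Notation Im := (@complex.Im R).
Local Notation V := 'cV[C]_n.
Local Notation M := 'M[C]_n.

Definition ej (j : 'I_n) : V := delta_mx j 0.

Lemma inner_ej_r (x : V) j : inner x (ej j) = x j 0.
Proof.
rewrite /inner (bigD1 j) //= big1 => [|i ij]; last by rewrite /ej mxE (negbTE ij) rmorph0 mulr0.
by rewrite /ej mxE !eqxx rmorph1 mulr1 addr0.
Qed.
Lemma inner_ej_l (x : V) j : inner (ej j) x = conjc (x j 0).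
Proof. by rewrite innerC inner_ej_r. Qed.
Lemma nn_ej j : nn (ej j) = 1.
Proof. by rewrite /nn inner_ej_r /ej mxE !eqxx. Qed.

Lemma exists_small (x : V) : (1 < n)%N -> nn x = 1 -> exists j : 'I_n, sq (x j 0) < 1.
Proof.
move=> n1 x1.
pose i0 : 'I_n := Ordinal (ltn_trans (ltnSn 0) n1).
pose i1 : 'I_n := Ordinal n1.
have ne : i1 != i0 by [].
have hs : sq (x i0 0) + sq (x i1 0) <= 1.
  rewrite -x1 nnE (bigD1 i0) //= (bigD1 i1) //= addrA lerDl.
  by apply: sumr_ge0 => i _; apply: sq_ge0.
have [h|h] := ltrP (sq (x i0 0)) 1; first by exists i0.
exists i1; have := sq_ge0 (x i0 0); have := sq_ge0 (x i1 0).
move: hs h; move: (sq (x i0 0)) (sq (x i1 0)) => a b; lra.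
Qed.

Lemma exists_orth (x : V) : (1 < n)%N -> nn x = 1 -> exists z : V, inner x z = 0 /\ nn z = 1.
Proof.
move=> n1 x1; have [j hj] := exists_small n1 x1.
pose w := ej j - conjc (x j 0) *: x.
have hw : inner x w = 0.
  by rewrite /w innerBr innerZr inner_ej_r conjK inner_xx x1 mulr1 subrr.
have nw : nn w = 1 - sq (x j 0).
  rewrite /w nnB nnZ nn_ej x1 innerZr inner_ej_l conjK sqJ.
  move: (x j 0) => z; rewrite /sq ?reimE; ring.
case: (unit_decomp w) => [w0|[s [y1 [s0 y11 wE _]]]].
  by move: nw; rewrite w0 /nn inner0l /=; move: hj; move: (sq (x j 0)) => a; lra.
exists y1; split => //.
move: hw; rewrite wE innerZr conjc_real => /eqP; rewrite mulf_eq0 => /orP [|/eqP //].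
by rewrite (inj_eq (@complexI R)) gt_eqF.
Qed.
End Orth.

Section Sector.
Variable R : realType.
Variable n : nat.
Local Notation C := R[i].
Local Notation Re := (@complex.Re R).
Local Notation Im := (@complex.Im R).
Local Notation V := 'cV[C]_n.
Local Notation M := 'M[C]_n.

Lemma sector_ext (A : M) (alpha : R) : A \in @Pi_s R n alpha -> forall y : V,
  0 <= Re (inner (A *m y) y) /\ `|Im (inner (A *m y) y)| <= tan alpha * Re (inner (A *m y) y).
Proof.
rewrite inE => hA y.
have hu : forall y1 : V, nn y1 = 1 ->
    0 < Re (inner (A *m y1) y1) /\ `|Im (inner (A *m y1) y1)| <= tan alpha * Re (inner (A *m y1) y1).
  move=> y1 y11; apply: hA; exists y1 => //=; exact/vnorm1.
case: (unit_decomp y) => [->|[s [y1 [s0 y11 -> _]]]].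
  by rewrite mulmx0 inner0l /= normr0 mulr0.
rewrite inner_scale Re_realM Im_realM.
have [h1 h2] := hu y1 y11.
move: h1 h2; move: (Re (inner (A *m y1) y1)) (Im (inner (A *m y1) y1)) => a b h1 h2.
have s2 : 0 < s ^+ 2 by rewrite exprn_gt0.
split; first by rewrite mulr_ge0 // ?ltW.
rewrite normrM (ger0_norm (ltW s2)); have := ler_wpM2l (ltW s2) h2.
move: (tan alpha) `|b| => T B.
lra.
Qed.
End Sector.
Section FinalReal2.
Variable R : realType.
Lemma real_lower (Q c s t w N : R) : 0 < Q -> 0 < c -> s ^+ 2 + c ^+ 2 = 1 -> t * c = s ->
  N <= 2 * (1 + t ^+ 2) * (w / Q) ^+ 2 -> Q ^+ 2 * c ^+ 2 / 2 * N <= w ^+ 2.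
Proof.
move=> Q0 c0 sc tc hN.
have k0 : 0 <= Q ^+ 2 * c ^+ 2 / 2 by rewrite divr_ge0 // mulr_ge0 // sqr_ge0.
apply: le_trans (ler_wpM2l k0 hN) _.
have -> : Q ^+ 2 * c ^+ 2 / 2 * (2 * (1 + t ^+ 2) * (w / Q) ^+ 2) =
          w ^+ 2 * (c ^+ 2 + (t * c) ^+ 2).
  by field; rewrite gt_eqF.
by rewrite tc addrC sc mulr1.
Qed.
Lemma real_upper (w B r N : R) : 0 <= w -> 0 <= r -> w <= B * r -> r ^+ 2 = N / 2 ->
  w ^+ 2 <= B ^+ 2 * (N / 2).
Proof.
move=> w0 r0 hw hr; rewrite -hr -exprMn; apply: lerXn2r => //; rewrite ?nnegrE //.
exact: le_trans hw.
Qed.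
End FinalReal2.

Section Final.
Variable R : realType.
Variable n : nat.
Local Notation C := R[i].
Local Notation Re := (@complex.Re R).
Local Notation Im := (@complex.Im R).
Local Notation V := 'cV[C]_n.
Local Notation M := 'M[C]_n.
Variables (alpha : R) (A : M) (q : C).
Hypotheses (ha0 : 0 <= alpha) (ha1 : alpha < pi / 2) (hA : A \in @Pi_s R n alpha).
Hypotheses (hq0 : 0 < cabs q) (hq1 : cabs q <= 1).
Variables (H K : M).
Hypotheses (hH : Herm H) (hK : Herm K) (hAv : forall x : V, A *m x = H *m x + 'i *: (K *m x)).
Hypothesis hReH : forall x : V, Re (inner (H *m x) x) = Re (inner (A *m x) x).
Hypothesis hReK : forall x : V, Re (inner (K *m x) x) = Im (inner (A *m x) x).
Hypothesis hM : Herm (Mm A).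
Hypothesis hMv : forall x : V, Re (inner (Mm A *m x) x) = 2 * (nn (H *m x) + nn (K *m x)).

Lemma c_gt0 : 0 < cos alpha.
Proof.
apply: cos_gt0_pihalf; rewrite ha1 andbT; apply: lt_le_trans ha0 => //.
by rewrite oppr_lt0 divr_gt0 ?pi_gt0.
Qed.
Lemma s_ge0 : 0 <= sin alpha.
Proof.
apply: sin_ge0_pi; rewrite ha0 /=; apply: (le_trans (ltW ha1)).
have hp : 0 < (pi : R) := pi_gt0 _; lra.
Qed.
Lemma sc1 : sin alpha ^+ 2 + cos alpha ^+ 2 = 1.
Proof. by rewrite addrC cos2Dsin2. Qed.
Lemma tc1 : tan alpha * cos alpha = sin alpha.
Proof. by rewrite /tan divfK // gt_eqF // c_gt0. Qed.
Lemma t_ge0 : 0 <= tan alpha.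
Proof. by rewrite /tan divr_ge0 ?s_ge0 // ltW // c_gt0. Qed.

Lemma hpsdA (z : V) : 0 <= Re (inner (H *m z) z).
Proof. by rewrite hReH; case: (sector_ext hA z). Qed.
Lemma hsecA (z : V) : `|Re (inner (K *m z) z)| <= tan alpha * Re (inner (H *m z) z).
Proof. by rewrite hReH hReK; case: (sector_ext hA z). Qed.

Let N := opnorm (Mm A).
Let r := Num.sqrt (N / 2).
Let S := Num.sqrt ((1 - cabs q ^+ 2) * (1 + 2 * sin alpha ^+ 2)).

Lemma r_ge0 : 0 <= r. Proof. exact: sqrtr_ge0. Qed.
Lemma r2 : r ^+ 2 = N / 2.
Proof. by rewrite sqr_sqrtr // divr_ge0 // opnorm_ge0. Qed.

Lemma pt_bound (x y : V) : nn x = 1 -> nn y = 1 -> inner x y = q ->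
  cabs (inner (A *m x) y) <= (S + cabs q) * r.
Proof.
move=> x1 y1 hxy.
have e1 : inner (A *m x) y = q * inner (A *m x) x + inner (A *m x) (y - conjc q *: x).
  by rewrite innerBr innerZr conjK addrC subrK.
have nw : nn (y - conjc q *: x) = 1 - sq q.
  rewrite nnB nnZ sqJ x1 y1 innerZr conjK [inner y x]innerC hxy.
  move: q => z; rewrite /sq ?reimE; ring.
have p1 : cabs (inner (A *m x) x) <= r.
  rewrite cabsE -(ger0_norm r_ge0) -sqrtr_sqr ler_sqrt ?sqr_ge0 // r2.
  have := UBb hMv x1; rewrite hReH hReK.
  by rewrite /sq.
have p2 : cabs (inner (A *m x) (y - conjc q *: x)) <= S * r.
  have S0 : 0 <= S := sqrtr_ge0 _.
  apply: le_from_sq; first exact: mulr_ge0 S0 r_ge0.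
  rewrite cabs_sq; apply: le_trans (CS _ _) _.
  rewrite nw hAv.
  have hU := UBc hH hK hpsdA hsecA hMv c_gt0 s_ge0 sc1 tc1 x1.
  rewrite -/N -r2 in hU.
  have hq : sq q <= 1.
    rewrite -cabs_sq; have := cabs_ge0 q; move: hq1; move: (cabs q) => Q; nra.
  rewrite exprMn sqr_sqrtr; last first.
    by apply: mulr_ge0; [rewrite cabs_sq subr_ge0|rewrite addr_ge0 // mulr_ge0 // sqr_ge0].
  rewrite cabs_sq.
  have := nn_ge0 (H *m x + 'i *: (K *m x)).
  move: hU hq; move: (nn (H *m x + 'i *: (K *m x))) (sq q) (sin alpha) r => a b s' r'.
  move=> hU hq a0; nra.
rewrite e1; apply: le_trans (cabsD _ _) _; rewrite cabsM.
have := cabs_ge0 q; move: p1 p2.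
move: (cabs (inner (A *m x) x)) (cabs (inner (A *m x) (y - conjc q *: x))) (cabs q) => u v Q.
have := r_ge0; move: r S => r' S'; nra.
Qed.

Definition wset := [set r0 | exists x y : V,
     [/\ vnorm x = 1, vnorm y = 1, inner x y = q & r0 = cabs (inner (A *m x) y)]].
Lemma wq_set_bound : forall r', wset r' -> r' <= (S + cabs q) * r.
Proof. by move=> r' [x [y [/vnorm1 x1 /vnorm1 y1 hxy ->]]]; exact: pt_bound. Qed.
Lemma B_ge0 : 0 <= (S + cabs q) * r.
Proof. by rewrite mulr_ge0 ?r_ge0 // addr_ge0 ?sqrtr_ge0 ?cabs_ge0. Qed.
Lemma wq_le : wq q A <= (S + cabs q) * r.
Proof. exact: (sup_le B_ge0 wq_set_bound). Qed.
Lemma wq_ge0 : 0 <= wq q A.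
Proof.
apply: (sup_ge0 wq_set_bound) => r' [x [y [_ _ _ ->]]]; exact: cabs_ge0.
Qed.
Lemma in_wq (x y : V) : nn x = 1 -> nn y = 1 -> inner x y = q -> cabs (inner (A *m x) y) <= wq q A.
Proof.
move=> x1 y1 hxy; apply: (le_sup wq_set_bound).
by exists x, y; split => //; apply/vnorm1.
Qed.

Lemma cabs_double (a : C) : cabs (a + a) = 2 * cabs a.
Proof.
have -> : a + a = (2 : R)%:C * a by apply: complex_eq; rewrite ?reimE /=; ring.
by rewrite cabsM cabs_real ger0_norm.
Qed.

Lemma lower_pt (hn : (1 < n)%N \/ cabs q = 1) (x : V) : nn x = 1 ->
  cabs q * cabs (inner (A *m x) x) <= wq q A.
Proof.
move=> x1.
have hq : sq q <= 1.
  rewrite -cabs_sq; have := cabs_ge0 q; move: hq1; move: (cabs q) => Q; nra.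
have [z [hz hz1]] : exists z : V, inner x z = 0 /\ (1 - sq q) * (nn z - 1) = 0.
  case: hn => [n1|q1].
    by have [z [hz nz]] := exists_orth n1 x1; exists z; rewrite nz subrr mulr0.
  exists 0; rewrite inner0r -cabs_sq q1 expr1n subrr mul0r; split => //.
set S0 := Num.sqrt (1 - sq q).
have hS0 : S0 ^+ 2 = 1 - sq q by rewrite sqr_sqrtr // subr_ge0.
have ny : forall e : R, e ^+ 2 = 1 -> nn (conjc q *: x + (e * S0)%:C *: z) = 1.
  move=> e he; rewrite nnD !nnZ sqJ x1 sq_real innerZl innerZr hz mulr0 mulr0 /= mulr0 addr0.
  rewrite exprMn he mul1r hS0 mulr1.
  move: hz1; move: (sq q) (nn z) => a b; lra.
have iy : forall e : R, inner x (conjc q *: x + (e * S0)%:C *: z) = q.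
  by move=> e; rewrite innerDr !innerZr conjK inner_xx x1 hz mulr0 addr0 mulr1.
have ay : forall e : R, inner (A *m x) (conjc q *: x + (e * S0)%:C *: z) =
    q * inner (A *m x) x + (e * S0)%:C * inner (A *m x) z.
  by move=> e; rewrite innerDr !innerZr conjK conjc_real.
have hp := in_wq x1 (ny 1 (expr1n _ _)) (iy 1) ; rewrite ay in hp.
have m1 : (-1 : R) ^+ 2 = 1 by rewrite sqrrN expr1n.
have hm := in_wq x1 (ny (-1) m1) (iy (-1)); rewrite ay in hm.
rewrite -cabsM.
move: hp hm; rewrite mul1r mulN1r.
move: (q * inner (A *m x) x) (inner (A *m x) z) => a b.
move=> hp hm.
have e : a + a = (a + S0%:C * b) + ((- S0)%:C * b + a).
  by apply: complex_eq; rewrite ?reimE /=; ring.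
have := cabsD (a + S0%:C * b) ((- S0)%:C * b + a); rewrite -e cabs_double.
move: hp hm; rewrite [(- S0)%:C * b + a]addrC.
move: (cabs a) (cabs (a + S0%:C * b)) (cabs (a + (- S0)%:C * b)) (wq q A) => u v w W; lra.
Qed.

Lemma final_lower (hn : (1 < n)%N \/ cabs q = 1) :
  cabs q ^+ 2 * cos alpha ^+ 2 / 2 * N <= wq q A ^+ 2.
Proof.
set W := wq q A / cabs q.
have W0 : 0 <= W by rewrite divr_ge0 ?wq_ge0 ?cabs_ge0.
have hW : forall y : V, Re (inner (H *m y) y) <= W * nn y.
  move=> y; rewrite hReH.
  case: (unit_decomp y) => [->|[s [y1 [s0 y11 -> ny]]]].
    by rewrite mulmx0 inner0l /nn inner0l /= mulr0.
  rewrite inner_scale Re_realM ny mulrC; apply: ler_wpM2r; first exact: sqr_ge0.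
  apply: le_trans (Re_le_cabs _) _.
  rewrite /W ler_pdivlMr // mulrC; exact: lower_pt.
have hN := LB hH hK hM t_ge0 hpsdA hsecA hMv W0 hW.
exact: real_lower hq0 c_gt0 sc1 tc1 hN.
Qed.

Lemma final_upper : wq q A ^+ 2 <= (S + cabs q) ^+ 2 * (N / 2).
Proof. exact: real_upper wq_ge0 r_ge0 wq_le r2. Qed.
End Final.

Lemma decomp (R : realType) (n : nat) (A : 'M[R[i]]_n) : exists H K : 'M[R[i]]_n,
  [/\ Herm H, Herm K, (forall x : 'cV[R[i]]_n, A *m x = H *m x + 'i *: (K *m x)),
      (forall x : 'cV[R[i]]_n, complex.Re (inner (H *m x) x) = complex.Re (inner (A *m x) x)) &
      ((forall x : 'cV[R[i]]_n, complex.Re (inner (K *m x) x) = complex.Im (inner (A *m x) x)) /\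
      (forall x : 'cV[R[i]]_n, complex.Re (inner (Mm A *m x) x) = 2 * (nn (H *m x) + nn (K *m x))))].
Proof.
exists (Hm A), (Km A); split.
- exact: hermH.
- exact: hermK.
- exact: A_vec.
- exact: ReH.
- by split; [exact: ReK|exact: ReMxx].
Qed.

Theorem theorem2p16 (R : realType) (n : nat) (alpha : R) (A : 'M[R[i]]_n)
    (q : R[i]) :
  0 <= alpha -> alpha < pi / 2 ->
  A \in @Pi_s R n alpha ->
  0 < cabs q -> cabs q <= 1 ->
  ((1 < n)%N \/ cabs q = 1) ->
  let N := opnorm (adjmx A *m A + A *m adjmx A) in
  cabs q ^+ 2 * cos alpha ^+ 2 / 2 * N <= wq q A ^+ 2 /\
  wq q A ^+ 2 <=
    (Num.sqrt ((1 - cabs q ^+ 2) * (1 + 2 * sin alpha ^+ 2)) + cabs q) ^+ 2 * (N / 2).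
Proof.
move=> ha0 ha1 hA hq0 hq1 hn N.
have [H [K [hH hK hAv hReH [hReK hMv]]]] := decomp A.
have hM : Herm (Mm A) := hermM A.
split.
- exact: (final_lower ha0 ha1 hA hq0 hq1 hH hK hAv hReH hReK hM hMv hn).
- exact: (final_upper ha0 ha1 hA hq1 hH hK hAv hReH hReK hMv).
Qed.
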